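(* Let $(E,\Sigma,m)$ be a $\sigma$-finite measure space and $L^1=L^1(E,\Sigma,m)$. Let $(A_0,\mathcal{D}(A_0))$ be the infinitesimal generator of a stochastic semigroup on $L^1$, let $\varphi\ge 0$ be a measurable function on $E$, and let $P\colon L^1\to L^1$ be a stochastic operator. Let $L^1_\varphi=\{u\in L^1:\int_E\varphi|u|\,dm<\infty\}$ and let $A u=A_0u-\varphi u$ be defined on a domain $\mathcal{D}(A)\subseteq\mathcal{D}(A_0)\cap L^1_\varphi$, and assume that $(A,\mathcal{D}(A))$ is the infinitesimal generator of a positive strongly continuous contraction semigroup on $L^1$. Denote by $R(\lambda,A)=(\lambda-A)^{-1}$ its resolvent. If for some $\lambda>0$ there is $v\in L^1$ with $v>0$ a.e. such that $P(\varphi R(\lambda,A)v)\le v$, then \[ \lim_{n\to\infty}\|(P(\varphi R(\lambda,A)))^n u\|=0\quad\text{for all } u\in L^1 . \]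
   Context: A linear operator $P\colon L^1\to L^1$ is stochastic if it maps the set of densities $D=\{u\in L^1: u\ge 0,\ \|u\|=1\}$ into itself. A stochastic semigroup is a strongly continuous semigroup of stochastic operators. Note that $\varphi R(\lambda,A)$ maps $L^1$ into $L^1$ since the range of $R(\lambda,A)$ is $\mathcal{D}(A)\subseteq L^1_\varphi$. *)

(* Defs.v *)
From HB Require Import structures.
From mathcomp Require Import all_boot all_order all_algebra.
From mathcomp Require Import all_classical all_reals all_analysis.
Set Implicit Arguments. Unset Strict Implicit. Unset Printing Implicit Defensive.
Import Order.TTheory GRing.Theory Num.Theory.
Import numFieldNormedType.Exports.
Local Open Scope classical_set_scope.
Local Open Scope ring_scope.

(* Elements of L^1(E,Sigma,m) are represented by real-valued functions that
   are m-integrable; two representatives denote the same element of L^1 iff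
   they agree m-a.e.  An operator on L^1 is represented by a map on functions
   that sends integrable functions to integrable functions and respects a.e.
   equality of integrable functions. *)
Section L1.
Context d (T : measurableType d) (R : realType) (mu : {measure set T -> \bar R}).

Definition Op := (T -> R) -> (T -> R).

Definition L1 (u : T -> R) : Prop := mu.-integrable setT (EFin \o u).

Definition L1norm (u : T -> R) : \bar R := (\int[mu]_x (`|u x|)%:E)%E.

Definition L1eq (u v : T -> R) : Prop := u = v %[ae mu].

Definition L1le (u v : T -> R) : Prop := {ae mu, forall x, u x <= v x}.

Definition L1_linear_op (P : Op) : Prop :=
  [/\ (forall u, L1 u -> L1 (P u)),
      (forall u v, L1 u -> L1 v -> L1eq u v -> L1eq (P u) (P v)) &
      (forall (a : R) u v, L1 u -> L1 v ->
          L1eq (P (fun x => a * u x + v x)) (fun x => a * P u x + P v x))].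

Definition L1_bounded_op (P : Op) : Prop :=
  L1_linear_op P /\
  exists C : R, forall u, L1 u -> (L1norm (P u) <= C%:E * L1norm u)%E.

Definition density (u : T -> R) : Prop :=
  L1 u /\ L1le (fun=> 0) u /\ L1norm u = 1%E.

Definition stochastic_op (P : Op) : Prop :=
  L1_linear_op P /\ (forall u, density u -> density (P u)).

Definition positive_op (P : Op) : Prop :=
  forall u, L1 u -> L1le (fun=> 0) u -> L1le (fun=> 0) (P u).

Definition contraction_op (P : Op) : Prop :=
  forall u, L1 u -> (L1norm (P u) <= L1norm u)%E.

Definition C0_semigroup (S : R -> Op) : Prop :=
  [/\ (forall t, 0 <= t -> L1_bounded_op (S t)),
      (forall u, L1 u -> L1eq (S 0 u) u),
      (forall t s u, 0 <= t -> 0 <= s -> L1 u ->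
          L1eq (S (t + s) u) (S t (S s u))) &
      (forall u t0, L1 u -> 0 <= t0 ->
         (fun s => L1norm (fun x => S s u x - S t0 u x))
           @ (within (fun s : R => 0 <= s) (nbhs t0)) --> 0%E)].

Definition stochastic_semigroup (S : R -> Op) : Prop :=
  C0_semigroup S /\ forall t, 0 <= t -> stochastic_op (S t).

Definition positive_contraction_semigroup (S : R -> Op) : Prop :=
  C0_semigroup S /\
  forall t, 0 <= t -> positive_op (S t) /\ contraction_op (S t).

Definition generator (S : R -> Op) (DA : set (T -> R)) (A : Op) : Prop :=
  (forall u, DA u <->
     (L1 u /\ exists g, L1 g /\
        (fun t => L1norm (fun x => (S t u x - u x) / t - g x))
          @ 0^'+ --> 0%E)) /\
  (forall u, DA u -> L1 (A u) /\
        (fun t => L1norm (fun x => (S t u x - u x) / t - A u x))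
          @ 0^'+ --> 0%E).

Definition resolvent_of (DA : set (T -> R)) (A : Op) (lambda : R) (Res : Op)
  : Prop :=
  L1_linear_op Res /\
  (forall v, L1 v -> DA (Res v) /\
      L1eq (fun x => lambda * Res v x - A (Res v) x) v) /\
  (forall u, DA u -> L1eq (Res (fun x => lambda * u x - A u x)) u).

End L1.

(* Main.v *)
Require Import Defs.
From HB Require Import structures.
From mathcomp Require Import all_boot all_order all_algebra.
From mathcomp Require Import all_classical all_reals all_analysis.
From mathcomp Require Import measurable_realfun.
From mathcomp Require Import ring lra.
Set Implicit Arguments. Unset Strict Implicit. Unset Printing Implicit Defensive.
Import Order.TTheory GRing.Theory Num.Theory.
Import numFieldNormedType.Exports.
Local Open Scope classical_set_scope.
Local Open Scope ring_scope.


Section Basic.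
Context {d : measure_display} {T : measurableType d} {R : realType} {mu : {measure set T -> \bar R}}.

Local Notation L1 := (L1 mu).
Local Notation I f := (Rintegral mu setT f).

Lemma L1_meas u : L1 u -> measurable_fun setT u.
Proof. by move=> /integrableP[/measurable_EFinP]. Qed.

Lemma L1_fin u : L1 u -> (\int[mu]_x (u x)%:E)%E = (I u)%:E.
Proof. by move=> hu; rewrite /Rintegral fineK//; exact: integrable_fin_num. Qed.

Lemma L1_lin a u v : L1 u -> L1 v -> L1 (fun x => a * u x + v x).
Proof.
move=> hu hv.
have h : mu.-integrable setT (fun x => a%:E * (EFin \o u) x + (EFin \o v) x)%E.
  by apply: integrableD => //; exact: integrableZl.
by apply: eq_integrable h => // x _ /=; rewrite EFinD EFinM.
Qed.

Lemma L1_0 : L1 (fun=> 0).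
Proof. exact: integrable0. Qed.

Lemma L1_scale a u : L1 u -> L1 (fun x => a * u x).
Proof.
move=> hu; have := L1_lin a hu L1_0.
by apply: eq_integrable => // x _ /=; rewrite addr0.
Qed.

Lemma L1_add u v : L1 u -> L1 v -> L1 (fun x => u x + v x).
Proof.
move=> hu hv; have := L1_lin 1 hu hv.
by apply: eq_integrable => // x _ /=; rewrite mul1r.
Qed.

Lemma L1_sub u v : L1 u -> L1 v -> L1 (fun x => u x - v x).
Proof.
move=> hu hv; have := L1_lin (-1) hv hu.
by apply: eq_integrable => // x _ /=; rewrite mulN1r addrC.
Qed.

Lemma L1_abs u : L1 u -> L1 (fun x => `|u x|).
Proof. by move=> hu; exact: integrable_norm. Qed.

Lemma L1_dom (u g : T -> R) : measurable_fun setT u -> L1 g ->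
  (forall x, `|u x| <= `|g x|) -> L1 u.
Proof.
move=> mu' hg hug; apply: le_integrable hg => //.
  exact/measurable_EFinP.
by move=> x _ /=; rewrite lee_fin.
Qed.

Lemma I_lin a u v : L1 u -> L1 v -> I (fun x => a * u x + v x) = a * I u + I v.
Proof.
move=> hu hv; rewrite RintegralD//; last exact: L1_scale.
by rewrite RintegralZl.
Qed.

Lemma I_add u v : L1 u -> L1 v -> I (fun x => u x + v x) = I u + I v.
Proof. by move=> hu hv; rewrite RintegralD. Qed.

Lemma I_sub u v : L1 u -> L1 v -> I (fun x => u x - v x) = I u - I v.
Proof. by move=> hu hv; rewrite RintegralB. Qed.

Lemma I_scale a u : L1 u -> I (fun x => a * u x) = a * I u.
Proof. by move=> hu; rewrite RintegralZl. Qed.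

Lemma I_ae_eq u v : L1 u -> L1 v -> L1eq mu u v -> I u = I v.
Proof.
move=> hu hv huv; rewrite /Rintegral; congr fine.
apply: ae_eq_integral => //.
- by apply/measurable_EFinP; exact: L1_meas.
- by apply/measurable_EFinP; exact: L1_meas.
- by apply: filterS huv => x h /h ->.
Qed.

Lemma I_ae_ge0 u : L1 u -> L1le mu (fun=> 0) u -> 0 <= I u.
Proof.
move=> hu hu0.
have mx : measurable_fun setT (fun x => Num.max (u x) 0).
  by apply: measurable_maxr; [exact: L1_meas | exact: measurable_cst].
have hx : L1 (fun x => Num.max (u x) 0).
  apply: (L1_dom mx hu) => x; rewrite ger0_norm ?le_max ?lexx ?orbT//.
  by rewrite ge_max normr_ge0 ler_norm.
rewrite (@I_ae_eq u (fun x => Num.max (u x) 0))//.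
  by apply: Rintegral_ge0 => x _; rewrite le_max lexx orbT.
by apply: filterS hu0 => x h _; rewrite max_l.
Qed.


Lemma I_ae_le u v : L1 u -> L1 v -> L1le mu u v -> I u <= I v.
Proof.
move=> hu hv huv; rewrite -subr_ge0 -I_sub//; apply: I_ae_ge0; first exact: L1_sub.
by apply: filterS huv => x; rewrite subr_ge0.
Qed.

Lemma I_le u v : L1 u -> L1 v -> (forall x, u x <= v x) -> I u <= I v.
Proof. by move=> hu hv huv; apply: le_Rintegral. Qed.

Lemma L1norm_I u : L1 u -> L1norm mu u = (I (fun x => `|u x|))%:E.
Proof. by move=> hu; rewrite /L1norm -L1_fin//; exact: L1_abs. Qed.

Lemma I_le_abs u : L1 u -> I u <= I (fun x => `|u x|).
Proof.
move=> hu; exact: le_trans (ler_norm _) (le_normr_Rintegral measurableT hu).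
Qed.

Lemma I_ge_Nabs u : L1 u -> - I (fun x => `|u x|) <= I u.
Proof.
move=> hu; rewrite lerNl.
apply: le_trans (le_normr_Rintegral measurableT hu).
by rewrite -normrN ler_norm.
Qed.

Lemma I_abs_ge0 (u : T -> R) : 0 <= I (fun x => `|u x|).
Proof. by apply: Rintegral_ge0 => x _. Qed.

Lemma I_abs_eq0 u : L1 u -> I (fun x => `|u x|) = 0 -> L1eq mu u (fun=> 0).
Proof.
move=> hu h0.
have : (\int[mu]_x `|(EFin \o u) x|)%E = 0%E.
  by rewrite -[LHS]/(L1norm mu u) L1norm_I// h0.
move/(ae_eq_integral_abs mu measurableT (measurable_int mu hu)).
by apply: filterS => x h /h /= [->].
Qed.

Lemma I_abs_ae u : L1 u -> L1le mu (fun=> 0) u -> I (fun x => `|u x|) = I u.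
Proof.
move=> hu h0; apply: I_ae_eq => //; first exact: L1_abs.
by apply: filterS h0 => x h _; rewrite ger0_norm.
Qed.

End Basic.

Section Ops.
Context {d : measure_display} {T : measurableType d} {R : realType} {mu : {measure set T -> \bar R}}.

Local Notation L1 := (L1 mu).
Local Notation I f := (Rintegral mu setT f).

Lemma aeS (P Q : T -> Prop) : {ae mu, forall x, P x} ->
  (forall x, P x -> Q x) -> {ae mu, forall x, Q x}.
Proof. by move=> h1 h; exact: filterS h1. Qed.

Lemma aeS2 (P Q S : T -> Prop) : {ae mu, forall x, P x} -> {ae mu, forall x, Q x} ->
  (forall x, P x -> Q x -> S x) -> {ae mu, forall x, S x}.
Proof. by move=> h1 h2 h; exact: filterS2 h h1 h2. Qed.

Lemma aeS3 (P Q U S : T -> Prop) : {ae mu, forall x, P x} -> {ae mu, forall x, Q x} ->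
  {ae mu, forall x, U x} ->
  (forall x, P x -> Q x -> U x -> S x) -> {ae mu, forall x, S x}.
Proof. by move=> h1 h2 h3 h; exact: filterS3 h h1 h2 h3. Qed.

Lemma aeW' (P : T -> Prop) : (forall x, P x) -> {ae mu, forall x, P x}.
Proof. by move=> h; exact: aeW. Qed.

Lemma L1eqE (u v : T -> R) : L1eq mu u v -> {ae mu, forall x, u x = v x}.
Proof. by move=> h; apply: filterS h => x; apply. Qed.

Lemma L1eqI (u v : T -> R) : {ae mu, forall x, u x = v x} -> L1eq mu u v.
Proof. by move=> h; apply: filterS h => x ->. Qed.

Lemma L1eq_refl (u : T -> R) : L1eq mu u u.
Proof. by apply: L1eqI; apply: aeW'. Qed.

Section Lin.
Variable Q : Op T R.
Hypothesis hQ : L1_linear_op mu Q.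

Lemma linL1 u : L1 u -> L1 (Q u).
Proof. by case: hQ => h _ _; exact: h. Qed.

Lemma lin_ae u v : L1 u -> L1 v -> L1eq mu u v -> L1eq mu (Q u) (Q v).
Proof. by case: hQ => _ h _; exact: h. Qed.

Lemma lin_lin a u v : L1 u -> L1 v ->
  {ae mu, forall x, Q (fun x => a * u x + v x) x = a * Q u x + Q v x}.
Proof. by case: hQ => _ _ h hu hv; apply: L1eqE; exact: h. Qed.

Lemma lin_0 : {ae mu, forall x, Q (fun=> 0) x = 0}.
Proof.
have := lin_lin (-1) (L1_0 (mu:=mu)) (L1_0 (mu:=mu)).
have -> : (fun x : T => -1 * (0:R) + 0) = (fun=> 0) by apply/funext => x; rewrite mulr0 addr0.
by move=> h; refine (aeS h _) => x ->; rewrite mulN1r addNr.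
Qed.

Lemma lin_Z a u : L1 u -> {ae mu, forall x, Q (fun x => a * u x) x = a * Q u x}.
Proof.
move=> hu; have := lin_lin a hu (L1_0 (mu:=mu)).
have -> : (fun x : T => a * u x + 0) = (fun x => a * u x) by apply/funext => x; rewrite addr0.
by move=> h; refine (aeS2 h lin_0 _) => x -> ->; rewrite addr0.
Qed.

Lemma lin_D u v : L1 u -> L1 v -> {ae mu, forall x, Q (fun x => u x + v x) x = Q u x + Q v x}.
Proof.
move=> hu hv; have := lin_lin 1 hu hv.
have -> : (fun x : T => 1 * u x + v x) = (fun x => u x + v x) by apply/funext => x; rewrite mul1r.
by move=> h; refine (aeS h _) => x ->; rewrite mul1r.
Qed.

Lemma lin_B u v : L1 u -> L1 v -> {ae mu, forall x, Q (fun x => u x - v x) x = Q u x - Q v x}.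
Proof.
move=> hu hv; have := lin_lin (-1) hv hu.
have -> : (fun x : T => -1 * v x + u x) = (fun x => u x - v x) by apply/funext => x; rewrite mulN1r addrC.
by move=> h; refine (aeS h _) => x ->; rewrite mulN1r addrC.
Qed.

End Lin.

Definition plin (Q : Op T R) := L1_linear_op mu Q /\ positive_op mu Q.

Section Plin.
Variable Q : Op T R.
Hypothesis hQ : plin Q.

Lemma plin_lin : L1_linear_op mu Q. Proof. by case: hQ. Qed.

Lemma plin_pos u : L1 u -> L1le mu (fun=> 0) u -> L1le mu (fun=> 0) (Q u).
Proof. by case: hQ => _ h; exact: h. Qed.

Lemma plin_mono u v : L1 u -> L1 v -> L1le mu u v -> L1le mu (Q u) (Q v).
Proof.
move=> hu hv huv.
have h0 : L1le mu (fun=> 0) (fun x => v x - u x).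
  by refine (aeS huv _) => x; rewrite subr_ge0.
have h1 := plin_pos (L1_sub hv hu) h0.
by refine (aeS2 h1 (lin_B plin_lin hv hu) _) => x + e; rewrite e subr_ge0.
Qed.

Lemma plin_abs u : L1 u -> {ae mu, forall x, `|Q u x| <= Q (fun x => `|u x|) x}.
Proof.
move=> hu; have hau := L1_abs hu.
have h1 : L1le mu (fun=> 0) (fun x => `|u x| - u x).
  by apply: aeW' => x; rewrite subr_ge0 ler_norm.
have h2 : L1le mu (fun=> 0) (fun x => `|u x| + u x).
  by apply: aeW' => x; rewrite -lerBlDr sub0r -normrN ler_norm.
have g1 := plin_pos (L1_sub hau hu) h1.
have g2 := plin_pos (L1_add hau hu) h2.
have e1 := lin_B plin_lin hau hu.
have e2 := lin_D plin_lin hau hu.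
refine (aeS2 (aeS2 g1 g2 (fun x a b => conj a b)) (aeS2 e1 e2 (fun x a b => conj a b)) _).
move=> x [a b] [ea eb]; rewrite ea subr_ge0 in a; rewrite eb in b.
by rewrite ler_norml a andbT -subr_ge0 opprK addrC.
Qed.

End Plin.

Lemma plin_id : plin id.
Proof.
split; first split.
- by [].
- by [].
- by move=> a u v hu hv; exact: L1eq_refl.
- by [].
Qed.

Lemma plin_comp Q1 Q2 : plin Q1 -> plin Q2 -> plin (fun u => Q1 (Q2 u)).
Proof.
move=> h1 h2; have l1 := plin_lin h1; have l2 := plin_lin h2.
split; first split.
- by move=> u hu; apply: (linL1 l1); apply: (linL1 l2).
- move=> u v hu hv huv; apply: (lin_ae l1); try exact: (linL1 l2).
  exact: (lin_ae l2).
- move=> a u v hu hv; apply: L1eqI.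
  have e1 := lin_lin l2 a hu hv.
  have e2 : L1eq mu (Q1 (Q2 (fun x => a * u x + v x))) (Q1 (fun x => a * Q2 u x + Q2 v x)).
    apply: (lin_ae l1); first by apply: (linL1 l2); exact: L1_lin.
      by apply: L1_lin; exact: (linL1 l2).
    exact: L1eqI.
  have e3 := lin_lin l1 a (linL1 l2 hu) (linL1 l2 hv).
  by refine (aeS2 (L1eqE e2) e3 _) => x -> ->.
- move=> u hu hu0; apply: (plin_pos h1); first exact: (linL1 l2).
  exact: (plin_pos h2).
Qed.

Lemma plin_iter Q n : plin Q -> plin (iter n Q).
Proof.
move=> hQ; elim: n => [|n IH]; first exact: plin_id.
exact: (plin_comp hQ IH).
Qed.

Lemma I0 : I (fun=> 0) = 0.
Proof. by rewrite Rintegral_cst// mul0r. Qed.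

Lemma stoch_key Q u : stochastic_op mu Q -> L1 u -> L1le mu (fun=> 0) u ->
  L1le mu (fun=> 0) (Q u) /\ I (Q u) = I u.
Proof.
move=> [hl hd] hu hu0.
have c0 : 0 <= I u by exact: I_ae_ge0.
have [cz|cp] := eqVneq (I u) 0.
  have uz : L1eq mu u (fun=> 0).
    by apply: I_abs_eq0 => //; rewrite I_abs_ae.
  have qz := lin_ae hl hu (L1_0 (mu:=mu)) uz.
  have q0 := lin_0 hl.
  have qz' : {ae mu, forall x, Q u x = 0}.
    by refine (aeS2 (L1eqE qz) q0 _) => x -> ->.
  split; first by refine (aeS qz' _) => x ->.
  rewrite cz -I0; apply: I_ae_eq => //; first exact: (linL1 hl).
    exact: L1_0.
  exact: L1eqI.
have cpos : 0 < I u by rewrite lt_neqAle eq_sym cp.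
set c := I u.
pose u' := fun x => c^-1 * u x.
have hu' : L1 u' by exact: L1_scale.
have hu'0 : L1le mu (fun=> 0) u'.
  by refine (aeS hu0 _) => x h; rewrite /u' mulr_ge0// invr_ge0.
have Iu' : I u' = 1 by rewrite /u' I_scale// mulVf.
have [hQ1 [hQ2 hQ3]] := hd u' (conj hu' (conj hu'0 (etrans (L1norm_I hu') (congr1 EFin (etrans (I_abs_ae hu' hu'0) Iu'))))).
have eu : u = (fun x => c * u' x).
  by apply/funext => x; rewrite /u' mulrA mulfV ?mul1r.
have e := lin_Z hl c hu'.
rewrite eu; split.
  by refine (aeS2 e hQ2 _) => x -> h; rewrite mulr_ge0.
have IQ : I (Q u') = 1.
  rewrite L1norm_I // in hQ3; rewrite -(I_abs_ae hQ1 hQ2).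
  by case: hQ3.
rewrite (@I_ae_eq _ _ _ mu _ (fun x => c * Q u' x)).
- by rewrite I_scale// IQ mulr1.
- by apply: (linL1 hl); exact: L1_scale.
- by apply: L1_scale; exact: (linL1 hl).
- exact: L1eqI.
Qed.

Definition subst_op (Q : Op T R) : Prop := plin Q /\ (forall u, L1 u -> L1le mu (fun=> 0) u -> I (Q u) <= I u).

Lemma stoch_subst Q : stochastic_op mu Q -> subst_op Q.
Proof.
move=> hs; split; last by move=> u hu hu0; have [_ ->] := stoch_key hs hu hu0.
split; first by case: hs.
by move=> u hu hu0; have [] := stoch_key hs hu hu0.
Qed.

Lemma subst_contr Q u : subst_op Q -> L1 u ->
  I (fun x => `|Q u x|) <= I (fun x => `|u x|).
Proof.
move=> [hp hs] hu; have hl := plin_lin hp.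
have hau := L1_abs hu.
apply: (@le_trans _ _ (I (Q (fun x => `|u x|)))).
  apply: I_ae_le; first by apply: L1_abs; exact: (linL1 hl).
    exact: (linL1 hl).
  exact: plin_abs.
by apply: hs => //; apply: aeW' => x.
Qed.

Lemma subst_comp Q1 Q2 : subst_op Q1 -> subst_op Q2 -> subst_op (fun u => Q1 (Q2 u)).
Proof.
move=> [p1 s1] [p2 s2]; split; first exact: plin_comp.
move=> u hu hu0; apply: le_trans (s2 _ hu hu0).
apply: s1; first exact: (linL1 (plin_lin p2)).
exact: (plin_pos p2).
Qed.

Lemma subst_iter Q n : subst_op Q -> subst_op (iter n Q).
Proof.
move=> hQ; elim: n => [|n IH].
  by split; [exact: plin_id | move=> u _ _].
exact: (subst_comp hQ IH).
Qed.

End Ops.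


Section Approx.
Context {d : measure_display} {T : measurableType d} {R : realType} {mu : {measure set T -> \bar R}}.
Local Notation L1 := (L1 mu).
Local Notation I f := (Rintegral mu setT f).

Lemma near_approx (F : R -> T -> R) (g : T -> R) (P : R -> Prop) :
  (\forall t \near 0^'+, P t) ->
  (fun t => L1norm mu (fun x => F t x - g x)) @ 0^'+ --> 0%E ->
  L1 g -> (\forall t \near 0^'+, L1 (F t)) ->
  forall e, 0 < e -> exists t, [/\ P t, L1 (F t) & I (fun x => `|F t x - g x|) <= e].
Proof.
move=> hP hc hg hF e e0.
have hn : \forall t \near 0^'+, (L1norm mu (fun x => (F t x - g x)%R) < e%:E)%E.
  apply: (hc (fun y => (y < e%:E)%E)); apply: open_ereal_lt'; by rewrite lte_fin.
have h3 : \forall t \near 0^'+, (P t /\ L1 (F t)) /\ (L1norm mu (fun x => (F t x - g x)%R) < e%:E)%E.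
  near=> t; split; first split.
  - by near: t; exact: hP.
  - by near: t; exact: hF.
  - by near: t; exact: hn.
have [t [[Pt Ft] nt]] := @filter_ex _ _ (at_right_proper_filter (0:R)) _ h3.
exists t; split => //.
rewrite L1norm_I in nt; last exact: L1_sub.
by rewrite -lee_fin; apply: ltW.
Unshelve. all: by end_near. Qed.

Lemma L1_mask (m h : T -> R) : measurable_fun setT m ->
  (forall x, 0 <= m x <= 1) -> L1 h -> L1 (fun x => m x * h x).
Proof.
move=> mm m01 hh.
have mmh : measurable_fun setT (fun x => m x * h x).
  by apply: measurable_funM; [exact: mm | exact: (L1_meas hh)].
apply: (L1_dom mmh hh).
move=> x; have /andP[m0 m1] := m01 x.
rewrite normrM (ger0_norm m0) -[leRHS]mul1r; apply: ler_wpM2r => //.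
Qed.

Lemma ev_zero (h : nat -> R) : (exists N, forall k, (N <= k)%N -> h k = 0) ->
  h @ \oo --> 0.
Proof.
move=> [N hN]; apply: cvg_near_cst; near=> k; apply: hN.
by near: k; exact: nbhs_infty_ge.
Unshelve. all: by end_near. Qed.

Lemma dct0 (h : nat -> T -> R) (G : T -> R) :
  (forall n, measurable_fun setT (h n)) -> L1 G ->
  (forall n x, `|h n x| <= G x) ->
  {ae mu, forall x, (fun n => h n x) @ \oo --> 0} ->
  (fun n => I (fun x => `|h n x|)) @ \oo --> 0.
Proof.
move=> mh hG hle hc.
have := @dominated_convergence _ T R mu setT measurableT (fun n => EFin \o h n)
  (cst 0%E) (EFin \o G).
case.
- by move=> n; apply/measurable_EFinP.
- exact: measurable_cst.
- refine (aeS hc _) => x hx _.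
  by apply: cvg_EFin; [exact: nearW | exact: hx].
- exact: hG.
- by apply: aeW' => x n _ /=; rewrite lee_fin.
move=> _ hcv _.
have := fine_cvg hcv.
have -> : (fine \o [sequence (\int[mu]_(x in setT) `|(EFin \o h n) x - cst 0%E x|)%E]_n)
    = (fun n => I (fun x => `|h n x|)).
  apply/funext => n /=; rewrite /Rintegral; congr fine.
  by apply: eq_integral => x _ /=; rewrite subr0.
by apply; exact: filter_filter.
Qed.

End Approx.


Section Main.
Context {d : measure_display} {T : measurableType d} {R : realType} {mu : {measure set T -> \bar R}}.
Context (S0 : R -> Op T R) (D0 : set (T -> R)) (A0 : Op T R)
  (hS0 : stochastic_semigroup mu S0) (hA0 : generator mu S0 D0 A0)
  (phi : T -> R) (phi_meas : measurable_fun setT phi)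
  (phi_ge0 : forall x, 0 <= phi x)
  (P : Op T R) (hP : stochastic_op mu P)
  (DA : set (T -> R)) (A : Op T R)
  (hDA : forall u, DA u ->
     D0 u /\ L1 mu u /\
     (\int[mu]_x (phi x * `|u x|)%:E < +oo)%E)
  (hA : forall u, DA u -> L1eq mu (A u) (fun x => A0 u x - phi x * u x))
  (S : R -> Op T R) (hS : positive_contraction_semigroup mu S)
  (hgen : generator mu S DA A)
  (lambda : R) (hlambda : 0 < lambda)
  (Res : Op T R) (hRes : resolvent_of mu DA A lambda Res).

Local Notation L1 := (L1 mu).
Local Notation I f := (Rintegral mu setT f).
Local Notation plin := (@plin _ _ _ mu).
Local Notation subst_op := (@subst_op _ _ _ mu).

Lemma S_plin t : 0 <= t -> plin (S t).
Proof.
move=> t0; have [[hb _ _ _] hpc] := hS.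
by split; [exact: (hb t t0).1 | exact: (hpc t t0).1].
Qed.

Lemma S_contr t u : 0 <= t -> L1 u ->
  I (fun x => `|S t u x|) <= I (fun x => `|u x|).
Proof.
move=> t0 hu; have [_ hpc] := hS; have := (hpc t t0).2 u hu.
rewrite L1norm_I; last exact: (linL1 (plin_lin (S_plin t0))).
by rewrite L1norm_I// lee_fin.
Qed.

Lemma Res_lin : L1_linear_op mu Res. Proof. by case: hRes. Qed.

Lemma Res_DA f : L1 f -> DA (Res f).
Proof. by case: hRes => _ [h _] hf; case: (h f hf). Qed.

Lemma Res_eq f : L1 f -> L1eq mu (fun x => lambda * Res f x - A (Res f) x) f.
Proof. by case: hRes => _ [h _] hf; case: (h f hf). Qed.

Lemma DA_L1 w : DA w -> L1 w.
Proof. by move=> /hDA[_ []]. Qed.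

Lemma A_L1 w : DA w -> L1 (A w).
Proof. by case: hgen => _ h /h []. Qed.

Lemma A_lim w : DA w ->
  (fun t => L1norm mu (fun x => (S t w x - w x) / t - A w x)) @ 0^'+ --> 0%E.
Proof. by case: hgen => _ h /h []. Qed.

Lemma phiL1 w : DA w -> L1 (fun x => phi x * w x).
Proof.
move=> hw; have [_ [wL1 wfin]] := hDA hw.
apply/integrableP; split.
  apply/measurable_EFinP; apply: measurable_funM => //; exact: (L1_meas wL1).
apply: le_lt_trans wfin; rewrite le_eqVlt; apply/orP; left; apply/eqP.
by apply: eq_integral => x _ /=; rewrite normrM (ger0_norm (phi_ge0 x)).
Qed.

Lemma L1_opp u : L1 u -> L1 (fun x => - u x).
Proof.
move=> hu; have -> : (fun x => - u x) = (fun x => -1 * u x).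
  by apply/funext => x; rewrite mulN1r.
exact: L1_scale.
Qed.

Lemma I_opp u : L1 u -> I (fun x => - u x) = - I u.
Proof.
move=> hu; have -> : (fun x => - u x) = (fun x => -1 * u x).
  by apply/funext => x; rewrite mulN1r.
by rewrite I_scale// mulN1r.
Qed.

Lemma Res_pos f : L1 f -> L1le mu (fun=> 0) f -> L1le mu (fun=> 0) (Res f).
Proof.
move=> hf hf0; set w := Res f.
have hw : DA w by exact: Res_DA.
have wL1 : L1 w by exact: DA_L1.
have mw := L1_meas wL1.
pose m := fun x => if w x < 0 then (1:R) else 0.
have mm : measurable_fun setT m.
  apply: measurable_fun_ifT; [|exact: measurable_cst|exact: measurable_cst].
  by apply: measurable_fun_ltr => //; exact: measurable_cst.
have m01 x : 0 <= m x <= 1 by rewrite /m; case: ifP => _; rewrite ?lexx ?ler01.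
pose wn := fun x => Num.max (- w x) 0.
have wnL1 : L1 wn.
  apply: (L1_dom _ wL1).
    by apply: measurable_maxr; [exact: measurable_funN | exact: measurable_cst].
  move=> x; rewrite /wn; case: (leP 0 (w x)) => h.
    by rewrite max_r ?normr0// lerNl oppr0.
  by rewrite max_l ?normrN// lerNr oppr0 ltW.
have wn0 x : 0 <= wn x by rewrite le_max lexx orbT.
have ww x : 0 <= w x + wn x.
  rewrite /wn; case: (leP 0 (w x)) => h.
    by rewrite max_r ?addr0// lerNl oppr0.
  by rewrite max_l ?subrr// lerNr oppr0 ltW.
have mw_wn x : m x * w x = - wn x.
  rewrite /m /wn; case: ifP => h.
    by rewrite mul1r max_l ?opprK// lerNr oppr0 ltW.
  by rewrite mul0r max_r ?oppr0// lerNl oppr0 leNgt h.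
have Imw : I (fun x => m x * w x) = - I wn.
  have -> : (fun x => m x * w x) = (fun x => -1 * wn x + 0).
    by apply/funext=> x; rewrite mw_wn mulN1r addr0.
  by rewrite I_lin ?I0 ?mulN1r ?addr0//; exact: L1_0.
have stepa t : 0 < t -> I (fun x => m x * w x) <= I (fun x => m x * S t w x).
  move=> t0; have hSt := S_plin (ltW t0); have lS := plin_lin hSt.
  have Sw := linL1 lS wL1; have Swn := linL1 lS wnL1.
  have e1 := lin_D lS wL1 wnL1.
  have p1 := plin_pos hSt (L1_add wL1 wnL1) (aeW' (fun x =>
    (ww x : 0 <= w x + wn x))).
  have hle : L1le mu (fun x => - `|S t wn x|) (fun x => m x * S t w x).
    refine (aeS2 p1 e1 _) => x h e; rewrite e in h; rewrite /m; case: ifP => _.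
      rewrite mul1r; apply: (@le_trans _ _ (- S t wn x)).
        by rewrite lerN2 ler_norm.
      by rewrite -subr_ge0 opprK.
    by rewrite mul0r lerNl oppr0.
  apply: (le_trans _ (I_ae_le _ _ hle)); last 2 first.
  - by apply: L1_opp; exact: L1_abs.
  - exact: L1_mask.
  rewrite Imw I_opp ?lerN2; last exact: L1_abs.
  by rewrite -(I_abs_ae wnL1 (aeW' wn0)); exact: (S_contr (ltW t0) wnL1).
have stepb : 0 <= I (fun x => m x * A w x).
  have AL1 := A_L1 hw.
  apply/ler_addgt0Pr => e e0.
  have FL1 : \forall t \near 0^'+, L1 (fun x => (S t w x - w x) / t).
    apply: filterS (nbhs_right_gt (0:R)) => t t0.
    have -> : (fun x => (S t w x - w x) / t) = (fun x => t^-1 * (S t w x - w x)).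
      by apply/funext => x; rewrite mulrC.
    apply: L1_scale; apply: L1_sub => //.
    exact: (linL1 (plin_lin (S_plin (ltW t0)))).
  have [t [t0 Ft Fe]] := near_approx (nbhs_right_gt 0) (A_lim hw) AL1 FL1 e0.
  have SwL1 := linL1 (plin_lin (S_plin (ltW t0))) wL1.
  have mFL1 := L1_mask mm m01 Ft.
  have mAL1 := L1_mask mm m01 AL1.
  have mwL1 := L1_mask mm m01 wL1.
  have mSL1 := L1_mask mm m01 SwL1.
  have -> : I (fun x => m x * A w x) =
      I (fun x => m x * ((S t w x - w x) / t)) -
      I (fun x => m x * ((S t w x - w x) / t) - m x * A w x).
    by rewrite I_sub// opprB addrC subrK.
  have h1 : 0 <= I (fun x => m x * ((S t w x - w x) / t)).
    have -> : (fun x => m x * ((S t w x - w x) / t)) =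
        (fun x => t^-1 * (m x * S t w x - m x * w x)).
      by apply/funext => x; ring.
    rewrite I_scale; last exact: L1_sub.
    rewrite I_sub// mulr_ge0 ?invr_ge0 ?(ltW t0)// subr_ge0.
    exact: stepa.
  have h2 : I (fun x => m x * ((S t w x - w x) / t) - m x * A w x) <= e.
    apply: le_trans Fe; apply: le_trans (I_le_abs _) _; first exact: L1_sub.
    apply: I_le; [apply: L1_abs; exact: L1_sub | apply: L1_abs; exact: L1_sub |].
    move=> x; rewrite -mulrBr normrM -[leRHS]mul1r; apply: ler_wpM2r => //.
    by have /andP[a b] := m01 x; rewrite ger0_norm.
  lra.
have AwE : {ae mu, forall x, A w x = lambda * w x - f x}.
  by refine (aeS (L1eqE (Res_eq hf)) _) => x <-; rewrite opprB addrC subrK.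
have mfL1 := L1_mask mm m01 hf.
have mwL1 := L1_mask mm m01 wL1.
have IAw : I (fun x => m x * A w x) = lambda * I (fun x => m x * w x) - I (fun x => m x * f x).
  rewrite -I_scale// -I_sub//; last exact: L1_scale.
  apply: I_ae_eq; first by apply: L1_mask => //; exact: A_L1.
    by apply: L1_sub => //; exact: L1_scale.
  apply: L1eqI; refine (aeS AwE _) => x ->.
  by ring.
have Imf : 0 <= I (fun x => m x * f x).
  apply: I_ae_ge0 => //; refine (aeS hf0 _) => x h.
  by have /andP[a b] := m01 x; rewrite mulr_ge0.
have Imw0 : 0 <= I (fun x => m x * w x).
  have : 0 <= lambda * I (fun x => m x * w x).
    by rewrite IAw in stepb; lra.
  by rewrite pmulr_rge0.
have Iwn : I wn = 0.
  apply/eqP; rewrite eq_le; apply/andP; split.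
    by rewrite -oppr_ge0 -Imw.
  by apply: (@Rintegral_ge0 _ _ _ mu setT wn) => x _.
have : L1eq mu wn (fun=> 0).
  apply: I_abs_eq0 => //; rewrite -Iwn; apply: eq_Rintegral => x _.
  by rewrite ger0_norm.
move/L1eqE => h; refine (aeS h _) => x; rewrite /wn => hx.
have : - w x <= 0 by rewrite -hx le_max lexx.
by rewrite lerNl oppr0.
Qed.

Lemma Res_plin : plin Res.
Proof. by split; [exact: Res_lin | move=> u hu h0; exact: Res_pos]. Qed.

Lemma D0_L1 w : D0 w -> L1 w.
Proof. by case: hA0 => h _ /h []. Qed.

Lemma A0_int w : D0 w -> L1le mu (fun=> 0) w -> I (A0 w) <= 0.
Proof.
move=> hw w0; have wL1 := D0_L1 hw.
have [AL1 Alim] : L1 (A0 w) /\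
    (fun t => L1norm mu (fun x => (S0 t w x - w x) / t - A0 w x)) @ 0^'+ --> 0%E.
  by case: hA0 => _ h; exact: h.
have [_ hst] := hS0.
apply/ler_addgt0Pr => e e0.
have FL1 : \forall t \near 0^'+, L1 (fun x => (S0 t w x - w x) / t).
  apply: filterS (nbhs_right_gt (0:R)) => t t0.
  have -> : (fun x => (S0 t w x - w x) / t) = (fun x => t^-1 * (S0 t w x - w x)).
    by apply/funext => x; rewrite mulrC.
  apply: L1_scale; apply: L1_sub => //.
  by case: (hst t (ltW t0)) => hl _; exact: (linL1 hl).
have [t [t0 Ft Fe]] := near_approx (nbhs_right_gt 0) Alim AL1 FL1 e0.
have hs := hst t (ltW t0).
have SwL1 : L1 (S0 t w) by case: hs => hl _; exact: (linL1 hl).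
have -> : I (A0 w) =
    I (fun x => (S0 t w x - w x) / t) - I (fun x => (S0 t w x - w x) / t - A0 w x).
  by rewrite I_sub// opprB addrC subrK.
have h1 : I (fun x => (S0 t w x - w x) / t) = 0.
  have -> : (fun x => (S0 t w x - w x) / t) = (fun x => t^-1 * (S0 t w x - w x)).
    by apply/funext => x; rewrite mulrC.
  rewrite I_scale; last exact: L1_sub.
  by rewrite I_sub// (stoch_key hs wL1 w0).2 subrr mulr0.
have h2 : - I (fun x => (S0 t w x - w x) / t - A0 w x) <= e.
  apply: le_trans Fe; rewrite lerNl; apply: I_ge_Nabs; exact: L1_sub.
lra.
Qed.

Lemma RID f : L1 f -> L1le mu (fun=> 0) f ->
  I (fun x => phi x * Res f x) <= I f - lambda * I (Res f).
Proof.
move=> hf f0; set w := Res f.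
have hw : DA w by exact: Res_DA.
have wL1 : L1 w by exact: DA_L1.
have [hD0 _] := hDA hw.
have A0L1 : L1 (A0 w) by case: hA0 => _ h; case: (h w hD0).
have pwL1 := phiL1 hw.
have w0 : L1le mu (fun=> 0) w by exact: Res_pos.
have IA0 := A0_int hD0 w0.
have If : I f = lambda * I w - I (A0 w) + I (fun x => phi x * w x).
  rewrite -I_scale// -I_sub//; last exact: L1_scale.
  rewrite -I_add//; last by apply: L1_sub => //; exact: L1_scale.
  apply: I_ae_eq => //.
    by apply: L1_add => //; apply: L1_sub => //; exact: L1_scale.
  apply: L1eqI; refine (aeS2 (L1eqE (Res_eq hf)) (L1eqE (hA hw)) _) => x <- ->.
  by rewrite /w; ring.
lra.
Qed.

Definition Mr (u : T -> R) := fun x => phi x * Res u x.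

Lemma Mr_plin : plin Mr.
Proof.
have lR := Res_lin.
split; first split.
- by move=> u hu; apply: phiL1; exact: Res_DA.
- move=> u v hu hv huv; apply: L1eqI.
  by refine (aeS (L1eqE (lin_ae lR hu hv huv)) _) => x; rewrite /Mr => ->.
- move=> a u v hu hv; apply: L1eqI.
  by refine (aeS (lin_lin lR a hu hv) _) => x; rewrite /Mr => ->; ring.
- move=> u hu h0; refine (aeS (Res_pos hu h0) _) => x h.
  by rewrite /Mr mulr_ge0.
Qed.

Definition K (u : T -> R) := P (Mr u).

Lemma K_subst : subst_op K.
Proof.
have [pP _] := stoch_subst hP.
split; first exact: (plin_comp pP Mr_plin).
move=> u hu h0.
have ML1 : L1 (Mr u) by exact: (linL1 (plin_lin Mr_plin)).
have M0 := plin_pos Mr_plin hu h0.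
rewrite /K (stoch_key hP ML1 M0).2.
have h1 := RID hu h0.
have h2 : 0 <= I (Res u).
  by apply: I_ae_ge0; [exact: (linL1 Res_lin) | exact: Res_pos].
have h3 := mulr_ge0 (ltW hlambda) h2.
rewrite /Mr; lra.
Qed.

Section Seq.
Context (v : T -> R) (hv : L1 v) (hvpos : {ae mu, forall x, 0 < v x})
  (hPv : L1le mu (P (fun x => phi x * Res v x)) v).

Let Ks := K_subst.
Let Kp := Ks.1.
Let Kl := plin_lin Kp.

Definition vn n := iter n K v.
Definition gn n := Res (vn n).

Lemma v0 : L1le mu (fun=> 0) v.
Proof. by refine (aeS hvpos _) => x /ltW. Qed.

Lemma vn_L1 n : L1 (vn n).
Proof. exact: (linL1 (plin_lin (subst_iter n Ks).1) hv). Qed.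

Lemma vn_pos n : L1le mu (fun=> 0) (vn n).
Proof. exact: (plin_pos (subst_iter n Ks).1 hv v0). Qed.

Lemma vn_dec n : L1le mu (vn n.+1) (vn n).
Proof.
elim: n => [|n IH]; first exact: hPv.
exact: (plin_mono Kp (vn_L1 n.+1) (vn_L1 n) IH).
Qed.

Lemma vn_le0 n : L1le mu (vn n) v.
Proof.
elim: n => [|n IH]; first by apply: aeW' => x.
by refine (aeS2 (vn_dec n) IH _) => x; exact: le_trans.
Qed.

Lemma gn_L1 n : L1 (gn n).
Proof. exact: (linL1 Res_lin (vn_L1 n)). Qed.

Lemma gn_pos n : L1le mu (fun=> 0) (gn n).
Proof. exact: (Res_pos (vn_L1 n) (vn_pos n)). Qed.

Lemma gn_dec n : L1le mu (gn n.+1) (gn n).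
Proof. exact: (plin_mono Res_plin (vn_L1 n.+1) (vn_L1 n) (vn_dec n)). Qed.

Lemma gn_le0 n : L1le mu (gn n) (gn 0).
Proof. exact: (plin_mono Res_plin (vn_L1 n) hv (vn_le0 n)). Qed.

Lemma Kint n : I (vn n.+1) = I (fun x => phi x * gn n x).
Proof.
have ML1 : L1 (Mr (vn n)) by exact: (linL1 (plin_lin Mr_plin) (vn_L1 n)).
have M0 := plin_pos Mr_plin (vn_L1 n) (vn_pos n).
by rewrite [vn n.+1]/vn iterS -/(vn n) /K (stoch_key hP ML1 M0).2.
Qed.

Lemma KI n : I (vn n.+1) <= I (vn n) - lambda * I (gn n).
Proof. by rewrite Kint; exact: (RID (vn_L1 n) (vn_pos n)). Qed.

Lemma claim n : I (vn n) + lambda * n%:R * I (gn n) <= I v.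
Proof.
elim: n => [|n IH]; first by rewrite mulr0 mul0r addr0.
have h1 := KI n.
have h2 : lambda * n.+1%:R * I (gn n.+1) <= lambda * n.+1%:R * I (gn n).
  apply: ler_wpM2l; first by rewrite mulr_ge0// ltW.
  exact: (I_ae_le (gn_L1 _) (gn_L1 _) (gn_dec n)).
have h3 : lambda * n.+1%:R * I (gn n) = lambda * n%:R * I (gn n) + lambda * I (gn n).
  by rewrite -natr1; ring.
lra.
Qed.

Lemma g_bound n : lambda * n%:R * I (gn n) <= I v.
Proof.
have := claim n; have : 0 <= I (vn n) by exact: (I_ae_ge0 (vn_L1 n) (vn_pos n)).
lra.
Qed.

Definition hM (k : nat) x := Num.max (phi x - k%:R) 0 * `|gn 0 x|.

Lemma hM_meas k : measurable_fun setT (hM k).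
Proof.
apply: measurable_funM.
  apply: measurable_maxr; last exact: measurable_cst.
  by apply: measurable_funB => //; exact: measurable_cst.
exact: (L1_meas (L1_abs (gn_L1 0))).
Qed.

Lemma phig0_L1 : L1 (fun x => phi x * gn 0 x).
Proof. by apply: phiL1; apply: Res_DA; exact: hv. Qed.

Lemma hM_le k x : `|hM k x| <= `|phi x * gn 0 x|.
Proof.
rewrite /hM normrM [X in _ <= X]normrM normr_id ler_wpM2r//.
rewrite ger0_norm ?le_max ?lexx ?orbT// (ger0_norm (phi_ge0 x)).
by rewrite ge_max phi_ge0 andbT lerBlDr lerDl.
Qed.

Lemma hM_L1 k : L1 (hM k).
Proof. by apply: (L1_dom (hM_meas k) (L1_abs phig0_L1)) => x; rewrite normr_id hM_le. Qed.

Lemma tail_cvg : (fun k => I (fun x => `|hM k x|)) @ \oo --> 0.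
Proof.
apply: (dct0 hM_meas (L1_abs phig0_L1) hM_le).
apply: aeW' => x; apply: cvg_near_cst.
near=> k; rewrite /hM max_r ?mul0r// subr_le0.
by near: k; exact: nbhs_infty_ger.
Unshelve. all: by end_near. Qed.

Lemma split_bound n k : I (vn n.+1) <= k%:R * I (gn n) + I (hM k).
Proof.
rewrite Kint -I_scale; last exact: gn_L1.
rewrite -I_add//; [|exact: L1_scale (gn_L1 n)|exact: hM_L1].
apply: I_ae_le.
- by apply: phiL1; apply: Res_DA; exact: vn_L1.
- by apply: L1_add; [exact: L1_scale (gn_L1 n) | exact: hM_L1].
refine (aeS2 (gn_pos n) (gn_le0 n) _) => x g0 gle; rewrite /hM.
have e : phi x * gn n x = k%:R * gn n x + (phi x - k%:R) * gn n x by ring.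
case: (leP (phi x - k%:R) 0) => h.
  rewrite mul0r addr0 e -[leRHS]addr0 lerD2l.
  by rewrite mulr_le0_ge0.
rewrite e lerD2l; apply: ler_wpM2l; first exact: ltW.
exact: (le_trans gle (ler_norm _)).
Qed.

Lemma vn_cvg : (fun n => I (vn n)) @ \oo --> 0.
Proof.
rewrite -cvg_shiftS; apply/cvgr0Pnorm_le => e e0.
have e20 : 0 < e / 2 by rewrite divr_gt0.
have := tail_cvg; move/cvgr0Pnorm_le => /(_ _ e20) tl.
have [k hk] := filter_ex tl.
rewrite ger0_norm in hk; last exact: I_abs_ge0.
have Iv0 : 0 <= I v by exact: (I_ae_ge0 hv v0).
near=> n.
have hn : 2 * k%:R * I v / (lambda * e) + 1 <= n%:R.
  by near: n; exact: nbhs_infty_ger.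
have Ig0 : 0 <= I (gn n) by exact: (I_ae_ge0 (gn_L1 n) (gn_pos n)).
have hk' : 0 <= I (hM k) by apply: I_ae_ge0; [exact: hM_L1 | apply: aeW' => x; rewrite /hM mulr_ge0// le_max lexx orbT].
rewrite ger0_norm; last exact: (I_ae_ge0 (vn_L1 _) (vn_pos _)).
have hIk : I (hM k) <= e / 2.
  apply: le_trans hk; apply: I_le_abs; exact: hM_L1.
have B0 : 0 <= 2 * k%:R * I v / (lambda * e).
  by rewrite divr_ge0 ?mulr_ge0// ltW// mulr_gt0.
have n1 : 1 <= n%:R :> R by lra.
have c0 : 0 < lambda * n%:R by rewrite mulr_gt0// (lt_le_trans ltr01 n1).
have F1 := g_bound n.
have F2 : 2 * k%:R * I v <= n%:R * (lambda * e).
  by rewrite -ler_pdivrMr ?mulr_gt0//; lra.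
have F3 : (lambda * n%:R) * (2 * k%:R * I (gn n)) <= (lambda * n%:R) * e.
  have E1 : (lambda * n%:R) * (2 * k%:R * I (gn n)) = 2 * k%:R * (lambda * n%:R * I (gn n)) by ring.
  have E2 : (lambda * n%:R) * e = n%:R * (lambda * e) by ring.
  have F4 : 2 * k%:R * (lambda * n%:R * I (gn n)) <= 2 * k%:R * I v.
    by apply: ler_wpM2l => //; rewrite mulr_ge0.
  lra.
rewrite ler_pM2l// in F3.
have := split_bound n k.
move=> hh; rewrite /=; lra.
Unshelve. all: by end_near. Qed.

Definition cl (c y : R) := Num.max (- c) (Num.min y c).

Lemma clamp_prop (c y : R) : 0 <= c ->
  [/\ `|cl c y| <= `|y|, `|cl c y| <= c & `|y - cl c y| <= `|y|].
Proof.
move=> c0; rewrite /cl.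
have [h1|h1] := boolP (c <= y).
  rewrite (min_r h1) max_r; last lra.
  rewrite !ger0_norm; try lra.
  by split; lra.
rewrite -ltNge in h1; rewrite (min_l (ltW h1)).
have [h2|h2] := boolP (- c <= y).
  rewrite max_r// subrr normr0 normr_ge0; split => //.
  by case: (boolP (0 <= y)) => h; [rewrite ger0_norm|rewrite ltr0_norm -?ltNge]; lra.
rewrite -ltNge in h2.
rewrite max_l; last lra.
rewrite normrN (ger0_norm c0) (ltr0_norm (_ : y < 0)); last lra.
rewrite ler0_norm; last lra.
by split; lra.
Qed.

Lemma final u : L1 u -> (fun n => I (fun x => `|iter n K u x|)) @ \oo --> 0.
Proof.
move=> hu; apply/cvgr0Pnorm_le => e e0.
have e20 : 0 < e / 2 by rewrite divr_gt0.
pose vp x := Num.max (v x) 0.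
have mvp : measurable_fun setT vp.
  by apply: measurable_maxr; [exact: (L1_meas hv)|exact: measurable_cst].
have vp0 x : 0 <= vp x by rewrite le_max lexx orbT.
have vpL1 : L1 vp.
  apply: (L1_dom mvp hv) => x; rewrite ger0_norm// ge_max normr_ge0 andbT.
  exact: ler_norm.
have vpE : L1eq mu vp v.
  by apply: L1eqI; refine (aeS hvpos _) => x h; rewrite /vp max_l// ltW.
pose ut k x := cl (k%:R * vp x) (u x).
pose dk k x := u x - ut k x.
have mut k : measurable_fun setT (ut k).
  apply: measurable_maxr.
    by apply: measurable_funN; apply: measurable_funM => //; exact: measurable_cst.
  apply: measurable_minr; first exact: (L1_meas hu).
  by apply: measurable_funM => //; exact: measurable_cst.
have ck k x := clamp_prop (u x) (mulr_ge0 (ler0n _ k) (vp0 x)).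
have utL1 k : L1 (ut k).
  by apply: (L1_dom (mut k) hu) => x; have [] := ck k x.
have dkL1 k : L1 (dk k) by exact: L1_sub.
have dk_cvg : (fun k => I (fun x => `|dk k x|)) @ \oo --> 0.
  apply: (dct0 (fun k => L1_meas (dkL1 k)) (L1_abs hu)).
    by move=> k x; have [_ _] := ck k x.
  refine (aeS hvpos _) => x vx; apply: cvg_near_cst.
  near=> k; rewrite /dk /ut /cl.
  have hk : `|u x| / v x <= k%:R by near: k; exact: nbhs_infty_ger.
  rewrite ler_pdivrMr// in hk.
  have hvx : vp x = v x by rewrite /vp max_l// ltW.
  rewrite hvx.
  have a1 : u x <= k%:R * v x by exact: le_trans (ler_norm _) hk.
  have a2 : - (k%:R * v x) <= u x.
    by rewrite lerNl; apply: le_trans hk; rewrite -normrN ler_norm.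
  by rewrite min_l// max_r// subrr.
have := dk_cvg; move/cvgr0Pnorm_le => /(_ _ e20) tl.
have [k hk] := filter_ex tl.
rewrite ger0_norm in hk; last exact: I_abs_ge0.
have ek : 0 < e / 2 / (k%:R + 1) by rewrite divr_gt0// ltr_wpDl.
have := vn_cvg; move/cvgr0Pnorm_le => /(_ _ ek) va.
near=> n.
have vn_b : `|I (vn n)| <= e / 2 / (k%:R + 1) by near: n; exact: va.
rewrite ger0_norm in vn_b; last exact: (I_ae_ge0 (vn_L1 n) (vn_pos n)).
rewrite ger0_norm; last exact: I_abs_ge0.
have [Qp Qs] := subst_iter n Ks.
have Ql := plin_lin Qp.
have uE : u = (fun x => ut k x + dk k x).
  by apply/funext => x; rewrite /dk addrC subrK.
have eD := lin_D Ql (utL1 k) (dkL1 k).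
rewrite -uE in eD.
have QuL1 := linL1 Ql hu.
have QutL1 := linL1 Ql (utL1 k).
have QdkL1 := linL1 Ql (dkL1 k).
have h1 : I (fun x => `|iter n K u x|) <= I (fun x => `|iter n K (ut k) x|) + I (fun x => `|iter n K (dk k) x|).
  rewrite -I_add; [|exact: L1_abs|exact: L1_abs].
  apply: I_ae_le; [exact: L1_abs | by apply: L1_add; exact: L1_abs |].
  by refine (aeS eD _) => x ->; exact: ler_normD.
have h2 : I (fun x => `|iter n K (dk k) x|) <= e / 2.
  by apply: le_trans hk; exact: (subst_contr (conj Qp Qs) (dkL1 k)).
have h3 : I (fun x => `|iter n K (ut k) x|) <= k%:R * I (vn n).
  have a1 := plin_abs Qp (utL1 k).
  have a2 : L1le mu (fun x => `|ut k x|) (fun x => k%:R * vp x).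
    by apply: aeW' => x; have [_ + _] := ck k x.
  have a3 := plin_mono Qp (L1_abs (utL1 k)) (L1_scale _ vpL1) a2.
  have a4 := lin_Z Ql k%:R vpL1.
  have a5 := L1eqE (lin_ae Ql vpL1 hv vpE).
  rewrite -I_scale; last exact: vn_L1.
  apply: I_ae_le; [exact: L1_abs | by apply: L1_scale; exact: vn_L1 |].
  refine (aeS3 (aeS2 a1 a3 (fun x p q => le_trans p q)) a4 a5 _) => x h e4 e5.
  by rewrite e4 e5 in h.
have h4 : k%:R * I (vn n) <= e / 2.
  have kk : 0 < k%:R + 1 :> R by rewrite ltr_wpDl.
  have : (k%:R + 1) * I (vn n) <= e / 2.
    by rewrite -ler_pdivlMl// mulrC.
  have : 0 <= I (vn n) by exact: (I_ae_ge0 (vn_L1 n) (vn_pos n)).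
  lra.
lra.
Unshelve. all: by end_near. Qed.

End Seq.

End Main.

Theorem theorem3p2 (d : measure_display) (T : measurableType d) (R : realType)
  (mu : {measure set T -> \bar R}) (hmu : sigma_finite setT mu)
  (S0 : R -> Op T R) (D0 : set (T -> R)) (A0 : Op T R)
  (hS0 : stochastic_semigroup mu S0) (hA0 : generator mu S0 D0 A0)
  (phi : T -> R) (phi_meas : measurable_fun setT phi)
  (phi_ge0 : forall x, 0 <= phi x)
  (P : Op T R) (hP : stochastic_op mu P)
  (DA : set (T -> R)) (A : Op T R)
  (hDA : forall u, DA u ->
     D0 u /\ L1 mu u /\
     (\int[mu]_x (phi x * `|u x|)%:E < +oo)%E)
  (hA : forall u, DA u -> L1eq mu (A u) (fun x => A0 u x - phi x * u x))
  (S : R -> Op T R) (hS : positive_contraction_semigroup mu S)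
  (hgen : generator mu S DA A)
  (lambda : R) (hlambda : 0 < lambda)
  (Res : Op T R) (hRes : resolvent_of mu DA A lambda Res)
  (v : T -> R) (hv : L1 mu v) (hvpos : {ae mu, forall x, 0 < v x})
  (hPv : L1le mu (P (fun x => phi x * Res v x)) v) :
  forall u, L1 mu u ->
    (fun n : nat =>
       L1norm mu (iter n (fun w => P (fun x => phi x * Res w x)) u))
      @ \oo --> 0%E.
Proof.
move=> u hu.
have hf := final hS0 hA0 phi_meas phi_ge0 hP hDA hA hS hgen hlambda hRes hv hvpos hPv hu.
have -> : (fun n : nat =>
       L1norm mu (iter n (fun w => P (fun x => phi x * Res w x)) u)) =
    (fun n => (Rintegral mu setT (fun x => `|iter n (K phi P Res) u x|))%:E).
  apply/funext => n; rewrite L1norm_I//.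
  have [hp _] := subst_iter n (K_subst hS0 hA0 phi_meas phi_ge0 hP hDA hA hS hgen hlambda hRes).
  exact: (linL1 (plin_lin hp) hu).
by apply: cvg_EFin; [exact: nearW | exact: hf].
Qed.
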